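(* Let $T\in(\mathbb{C}^n)^{\otimes3}$ be a symmetric tensor with $T=\sum_{i=1}^r u_i^{\otimes3}$, where $u_1,\dots,u_r\in\mathbb{C}^n$ are linearly independent. Let $T_1,\dots,T_n$ be the slices of $T$, let $S\subset\mathbb{C}$ be a finite set, pick $\alpha_1,\dots,\alpha_n$ uniformly and independently at random from $S$, and set $T^{(\alpha)}=\sum_{i=1}^n\alpha_iT_i$. Let $T^{(\alpha)}=P_r\Sigma Q_r^*$ be a compact singular value decomposition, and let $p_1,\dots,p_r$ be the columns of $P_r$. Then, with probability at least $1-\frac{r}{|S|}$, $P_r$ is a semi-unitary $n\times r$ matrix with $\mathrm{span}\{p_1,\dots,p_r\}=\mathrm{span}\{u_1,\dots,u_r\}$.
   Context: The $k$-th slice of $T=(T_{ijk})$ is $T_k=(T_{ijk})_{i,j}$. A matrix $P\in\mathbb{C}^{n\times r}$ is semi-unitary if $P^*P=I_r$. For a matrix $M\in\mathbb{C}^{m\times n}$ of rank $s$, a compact singular value decomposition is a factorization $M=U_s\Sigma_sV_s^*$ with $\Sigma_s$ an $s\times s$ diagonal matrix with positive diagonal entries and $U_s\in\mathbb{C}^{m\times s}$, $V_s\in\mathbb{C}^{n\times s}$ semi-unitary. *)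

(* Defs.v *)
From HB Require Import structures.
From mathcomp Require Import all_boot all_order all_algebra.
From mathcomp Require Import complex.
From mathcomp Require Import boolp reals.
Set Implicit Arguments. Unset Strict Implicit. Unset Printing Implicit Defensive.
Import Order.TTheory GRing.Theory Num.Theory.
Local Open Scope ring_scope.

Definition ctrmx (R : realType) m n (A : 'M[R[i]]_(m, n)) : 'M[R[i]]_(n, m) :=
  (map_mx (@conjc R) A)^T.

Definition semi_unitary (R : realType) n s (P : 'M[R[i]]_(n, s)) : Prop :=
  ctrmx P *m P = 1%:M.

Definition compact_svd (R : realType) m n s (M : 'M[R[i]]_(m, n))
  (P : 'M[R[i]]_(m, s)) (d : 'rV[R[i]]_s) (Q : 'M[R[i]]_(n, s)) : Prop :=
  [/\ \rank M = s, (forall j, 0 < d 0 j), semi_unitary P, semi_unitary Q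
    & M = P *m diag_mx d *m ctrmx Q].

Definition tensor3 (R : realType) n := 'I_n -> 'I_n -> 'I_n -> R[i].

Definition slice (R : realType) n (T : tensor3 R n) (k : 'I_n) : 'M[R[i]]_n :=
  \matrix_(a, b) T a b k.

Definition tensor_comb (R : realType) n (T : tensor3 R n) (alpha : 'I_n -> R[i])
  : 'M[R[i]]_n := \sum_(k < n) alpha k *: slice T k.

(* the event of the theorem: for every compact SVD T^(alpha) = P_s Sigma Q_s^*,
   s = r, P is semi-unitary n x r, and span(cols P) = span(cols U) *)
Definition good_event (R : realType) n r (U : 'M[R[i]]_(n, r)) (M : 'M[R[i]]_n)
  : Prop :=
  forall s (P : 'M[R[i]]_(n, s)) d (Q : 'M[R[i]]_(n, s)),
    compact_svd M P d Q ->
    [/\ s = r, semi_unitary P & (P^T == U^T)%MS].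

(* Main.v *)
Require Import Defs.
From HB Require Import structures.
From mathcomp Require Import all_boot all_order all_algebra.
From mathcomp Require Import complex.
From mathcomp Require Import boolp reals.
Import Order.TTheory GRing.Theory Num.Theory.
Local Open Scope ring_scope.
From mathcomp Require Import ring.
Set Implicit Arguments. Unset Strict Implicit. Unset Printing Implicit Defensive.
Section Alg.
Variable F : fieldType.

Lemma sym_eqmx n r (U : 'M[F]_(n, r)) (b : 'rV[F]_r) :
  \rank U = r -> (forall l, b 0 l != 0) ->
  ((U *m diag_mx b *m U^T)^T == U^T)%MS.
Proof.
move=> rU b0.
have -> : (U *m diag_mx b *m U^T)^T = U *m diag_mx b *m U^T.
  by rewrite !trmx_mul trmxK tr_diag_mx mulmxA.
apply/andP; split; first exact: submxMl.
have fD : row_free (diag_mx b).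
  rewrite row_free_unit unitmxE det_diag unitfE.
  by apply/prodf_neq0 => l _.
have : row_full (U *m diag_mx b) by rewrite /row_full mxrankMfree // rU.
case/row_fullP => X HX.
have E : X *m (U *m diag_mx b *m U^T) = U^T by rewrite mulmxA HX mul1mx.
rewrite -{1}E; exact: submxMl.
Qed.

Lemma svd_eqmx n r s (M : 'M[F]_n) (U : 'M[F]_(n, r)) (P : 'M[F]_(n, s))
   (D : 'M[F]_s) (Q : 'M[F]_(s, n)) :
  \rank U = r -> (M^T == U^T)%MS -> \rank M = s -> M = P *m D *m Q ->
  s = r /\ (P^T == U^T)%MS.
Proof.
move=> rU MU rM EM.
have rMT : \rank M^T = s by rewrite mxrank_tr.
have sr : s = r by rewrite -rMT (eqmx_rank MU) mxrank_tr.
split => //.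
have MP : (M^T <= P^T)%MS by rewrite EM !trmx_mul mulmxA submxMl.
have := mxrank_leqif_sup MP.
case => _ E.
have PM : (P^T <= M^T)%MS.
  rewrite -E eqn_leq (mxrankS MP) rMT /=.
  exact: rank_leq_row.
apply/andP; split.
  apply: submx_trans PM _; by case/andP: MU.
apply: submx_trans MP; by case/andP: MU.
Qed.
End Alg.
Lemma union_bound (X : finType) r (P : 'I_r -> pred X) :
  (#|[set x | [exists l, P l x]]| <= \sum_(l < r) #|[set x | P l x]|)%N.
Proof.
rewrite -sum1_card.
apply: (@leq_trans (\sum_x \sum_(l < r) (P l x : nat))%N).
  rewrite [X in (_ <= X)%N](bigID (fun x => x \in [set x | [exists l, P l x]])) /=.
  apply: leq_trans (leq_addr _ _).
  rewrite big_mkcond [X in (_ <= X)%N]big_mkcond; apply: leq_sum => x _.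
  case: ifP => //; rewrite inE => /existsP [l Pl].
  by rewrite (bigD1 l) //= Pl.
rewrite exchange_big /=; apply: leq_sum => l _.
rewrite -sum1_card [X in (_ <= X)%N]big_mkcond; apply: leq_sum => x _.
by rewrite inE; case: (P l x).
Qed.

Section Cnt.
Variable F : fieldType.

Lemma count_bad n (S : seq F) (c : 'I_n -> F) k0 :
  uniq S -> c k0 != 0 ->
  (#|[set f : {ffun 'I_n -> 'I_(size S)} | (\sum_(k < n) nth 0 S (f k) * c k == 0)%R]|
     <= size S ^ n.-1)%N.
Proof.
move=> uS ck0.
set A := [set f | _].
pose phi (f : {ffun 'I_n -> 'I_(size S)}) := [ffun j : 'I_n.-1 => f (lift k0 j)].
rewrite -(card_in_imset (f := phi)).
  apply: leq_trans (max_card _) _.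
  by rewrite card_ffun card_ord card_ord.
move=> f g; rewrite !inE => /eqP Ef /eqP Eg /ffunP Ep.
have H : forall k, k != k0 -> f k = g k.
  move=> k; case: (unliftP k0 k) => [j -> _|->]; last by rewrite eqxx.
  by have := Ep j; rewrite !ffunE.
apply/ffunP => k.
case: (eqVneq k k0) => [->|/H //].
move: Ef; rewrite (bigD1 k0) //=.
rewrite (eq_bigr (fun k => nth (0:F) S (g k) * c k)); last by move=> i /H ->.
move: Eg; rewrite (bigD1 k0) //= => Eg.
rewrite -[RHS]Eg => /addIr /mulIf => /(_ ck0) /eqP.
rewrite nth_uniq // => /eqP; exact: val_inj.
Qed.
End Cnt.

Lemma comb_eq (R : realType) (n r : nat) (U : 'M[R[i]]_(n, r))
  (T : tensor3 R n) (al : 'I_n -> R[i]) :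
  (forall a b c, T a b c = \sum_(l < r) U a l * U b l * U c l) ->
  tensor_comb T al = U *m diag_mx (\row_l \sum_(k < n) al k * U k l) *m U^T.
Proof.
move=> HT; apply/matrixP => a b.
rewrite /tensor_comb summxE !mxE.
under eq_bigr => k _ do rewrite !mxE HT mulr_sumr.
rewrite exchange_big /=; apply: eq_bigr => l _.
rewrite mul_mx_diag !mxE mulr_sumr mulr_suml; apply: eq_bigr => k _.
by rewrite ?mxE; ring.
Qed.

Theorem theorem4p3 (R : realType) (n r : nat) (U : 'M[R[i]]_(n, r))
  (T : tensor3 R n) (S : seq R[i]) :
  (forall a b c, T a b c = \sum_(l < r) U a l * U b l * U c l) ->
  \rank U = r ->
  uniq S -> (0 < size S)%N ->
  1 - r%:R / (size S)%:R <=
    #|[set f : {ffun 'I_n -> 'I_(size S)} |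
        `[< good_event U (tensor_comb T (fun k => nth 0 S (f k))) >] ]|%:R
      / ((size S) ^ n)%:R :> R.
Proof.
move=> HT rU uS S0.
set N := size S.
set G := [set f | _].
pose B := [set f : {ffun 'I_n -> 'I_N} |
   [exists l : 'I_r, (\sum_(k < n) nth 0 S (f k) * U k l == 0)%R]].
have sub : (~: B \subset G)%N.
  apply/subsetP => f; rewrite !inE negb_exists => /forallP Hf.
  apply/asboolP => s P d Q [rM _ sP _ EM].
  have b0 : forall l, (\row_l \sum_(k < n) nth 0 S (f k) * U k l) 0 l != 0.
    by move=> l; rewrite mxE; exact: Hf l.
  have HM := comb_eq (fun k => nth 0 S (f k)) HT.
  have MU := sym_eqmx rU b0; rewrite -HM in MU.
  have [sr PU] := svd_eqmx rU MU rM EM.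
  by split.
have cB : (#|B| <= r * N ^ n.-1)%N.
  apply: leq_trans (union_bound _) _.
  apply: (@leq_trans (\sum_(l < r) N ^ n.-1)%N); last by rewrite sum_nat_const card_ord.
  apply: leq_sum => l _.
  case: (pickP (fun k => U k l != 0)) => [k0 Hk0 | H0]; first (exact: (@count_bad _ _ S (fun k => U k l) k0 uS Hk0)).
  exfalso.
  have fr : row_free U^T by rewrite /row_free mxrank_tr rU.
  have : delta_mx (0 : 'I_1) l *m U^T = 0 *m U^T.
    rewrite -rowE mul0mx; apply/matrixP => i j; rewrite !mxE.
    by have := H0 j; move/negbFE/eqP.
  move/(row_free_inj fr)/matrixP/(_ 0 l); rewrite !mxE !eqxx /=.
  by move/eqP; rewrite oner_eq0.
have cG : (#|~: B| <= #|G|)%N by exact: subset_leq_card.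
have cT : (#|B| + #|~: B| = N ^ n)%N by rewrite cardsC card_ffun !card_ord.
have Hn : (N ^ n <= #|G| + r * N ^ n.-1)%N.
  by rewrite -cT addnC leq_add.
have Hnat : (r * N ^ n.-1 * N = r * N ^ n)%N.
  case: n U rU {G sub B cB cG cT Hn HT T} => [|m] U rU /=.
    by have := rank_leq_row U; rewrite rU leqn0 => /eqP ->.
  by rewrite expnS mulnAC mulnA.
have N0 : (N%:R : R) != 0 by rewrite pnatr_eq0 -lt0n.
rewrite ler_pdivlMr; last by rewrite ltr0n expn_gt0 S0.
have E : (r%:R / N%:R) * (N ^ n)%:R = (r * N ^ n.-1)%:R :> R.
  by rewrite mulrAC -natrM -Hnat natrM mulfK.
rewrite mulrBl mul1r E lerBlDr -natrD ler_nat.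
exact: Hn.
Qed.
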